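(* Consider the LTI MIMO state-space model $$\alpha_{k+1}=T\alpha_k+Bx_k+\eta_k,\qquad y_k=Z\alpha_k+\beta x_k+\varepsilon_k,\qquad \begin{bmatrix}\eta_k\\ \varepsilon_k\end{bmatrix}\sim\mathcal N\!\left(0,\begin{bmatrix}Q&S\\ S^\top&H\end{bmatrix}\right),$$ $\alpha_0\sim\mathcal N(\bar\alpha_0,\Pi_0)$, $\Pi_0>0$, $H>0$, where the quantities $T,B,Z,\beta,Q,S,H,\bar\alpha_0,\Pi_0$ depend differentiably on a parameter vector $\theta\in\mathbb R^p$, while the observations $y_k$ and explanatory variables $x_k$ do not depend on $\theta$. For a matrix-valued function $A(\theta)$ write $\partial_iA:=\partial A/\partial\theta_i$. Let $\overline T=T-SH^{-1}Z$, $\overline B=B-SH^{-1}\beta$, $\overline Q=Q-SH^{-1}S^\top$. Algorithm 1a (UD-based LTI MIMO KF): factor $\Pi_0=\bar U_{\Pi_0}D_{\Pi_0}\bar U_{\Pi_0}^\top$, $H=\bar U_HD_H\bar U_H^\top$, $\overline Q=\bar U_{\overline Q}D_{\overline Q}\bar U_{\overline Q}^\top$; set $\hat\alpha_{0|0}=\bar\alpha_0$, $\bar U_{P_{0|0}}=\bar U_{\Pi_0}$, $D_{P_{0|0}}=D_{\Pi_0}$; for $k=1,\dots,N$: $\hat\alpha_{k|k-1}=\overline T\hat\alpha_{k-1|k-1}+\overline Bx_{k-1}+SH^{-1}y_{k-1}$; MWGS on $\mathbb A^\top=[\overline T\bar U_{P_{k-1|k-1}}\ \bar U_{\overline Q}]$,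 $\mathbb D_A=D_{P_{k-1|k-1}}\oplus D_{\overline Q}$ gives $\mathbb R=\bar U_{P_{k|k-1}}$, $\mathbb D_R=D_{P_{k|k-1}}$ (time update); MWGS on $\mathbb A^\top=\begin{bmatrix}\bar U_{P_{k|k-1}}&0\\ Z\bar U_{P_{k|k-1}}&\bar U_H\end{bmatrix}$, $\mathbb D_A=D_{P_{k|k-1}}\oplus D_H$ gives $\mathbb R=\begin{bmatrix}\bar U_{P_{k|k}}&\bar K_k^u\\0&\bar U_{R_{e,k}}\end{bmatrix}$, $\mathbb D_R=D_{P_{k|k}}\oplus D_{R_{e,k}}$ (measurement update); $e_k=y_k-Z\hat\alpha_{k|k-1}-\beta x_k$, $\bar e_k=\bar U_{R_{e,k}}^{-1}e_k$, $\hat\alpha_{k|k}=\hat\alpha_{k|k-1}+\bar K_k^u\bar e_k$. Algorithm 1b (differentiated UD-based LTI MIMO KF): for each $i=1,\dots,p$, in addition to running Algorithm 1a, it initializes with $\partial_i\bar U_{P_{0|0}}=\partial_i\bar U_{\Pi_0}$, $\partial_iD_{P_{0|0}}=\partial_iD_{\Pi_0}$, $\partial_i\hat\alpha_{0|0}=\partial_i\bar\alpha_0$ (using $\partial_i\overline T,\partial_i\overline B,\partial_i\overline Q$ and the derivatives of the factors of $\overline Q$ and $H$), and for $k=1,\dots,N$ computes: (a) $\partial_i\hat\alpha_{k|k-1}=(\partial_i\overline T)\hat\alpha_{k-1|k-1}+\overline T\,\partial_i\hat\alpha_{k-1|k-1}+(\partial_i\overline B)x_{k-1}+(\partial_iS)H^{-1}y_{k-1}-SH^{-1}(\partial_iH)H^{-1}y_{k-1}$;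 (b) in both the time and the measurement update, forms the pre-arrays $\mathbb A,\mathbb D_A$ of Algorithm 1a and their derivatives $\partial_i\mathbb A,\partial_i\mathbb D_A$, applies the Diff. UD scheme below to obtain $\mathbb R,\mathbb D_R,\partial_i\mathbb R,\partial_i\mathbb D_R$, and reads off the blocks $\partial_i\bar U_{P_{k|k-1}},\partial_iD_{P_{k|k-1}},\partial_i\bar U_{P_{k|k}},\partial_iD_{P_{k|k}},\partial_i\bar U_{R_{e,k}},\partial_iD_{R_{e,k}},\partial_i\bar K_k^u$ from the same positions as the corresponding undifferentiated blocks; (c) $\partial_i\bar e_k=-\bar U_{R_{e,k}}^{-1}(\partial_i\bar U_{R_{e,k}})\bar U_{R_{e,k}}^{-1}e_k-\bar U_{R_{e,k}}^{-1}\big[(\partial_iZ)\hat\alpha_{k|k-1}+Z\,\partial_i\hat\alpha_{k|k-1}+(\partial_i\beta)x_k\big]$; (d) $\partial_i\hat\alpha_{k|k}=\partial_i\hat\alpha_{k|k-1}+(\partial_i\bar K_k^u)\bar e_k+\bar K_k^u\,\partial_i\bar e_k$. Diff. UD scheme with inputs $\mathbb A,\mathbb D_A,\partial_i\mathbb A,\partial_i\mathbb D_A$: apply MWGS to obtain $\mathfrak W,\mathbb R,\mathbb D_R$; set $M_0=\mathfrak W^\top\mathbb D_A(\partial_i\mathbb A)\mathbb R^{-\top}$ and split $M_0=\bar L_0+D_0+\bar U_0$ into strictly lower triangular, diagonal and strictly upper triangular parts; set $M_2=\mathfrak W^\top(\partial_i\mathbb D_A)\mathfrak W$ and split $M_2=\bar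 L_2+D_2+\bar U_2$ likewise; output $\partial_i\mathbb R=\mathbb R(\bar L_0^\top+\bar U_0+\bar U_2)\mathbb D_R^{-1}$ and $\partial_i\mathbb D_R=2D_0+D_2$. Then Algorithm 1b computes the filter sensitivities of Algorithm 1a correctly: for every $k$ and $i$, the quantities it produces as $\partial_i\hat\alpha_{k|k-1}$, $\partial_i\bar U_{P_{k|k-1}}$, $\partial_iD_{P_{k|k-1}}$, $\partial_i\bar U_{P_{k|k}}$, $\partial_iD_{P_{k|k}}$, $\partial_i\bar U_{R_{e,k}}$, $\partial_iD_{R_{e,k}}$, $\partial_i\bar K_k^u$, $\partial_i\bar e_k$, $\partial_i\hat\alpha_{k|k}$ equal the partial derivatives with respect to $\theta_i$ of the corresponding quantities computed by Algorithm 1a, regarded as functions of $\theta$.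
   Context: $UDU^\top$ factorization: $P=\bar U_PD_P\bar U_P^\top$ with $\bar U_P$ unit upper triangular and $D_P$ diagonal. $A\oplus B:=\mathrm{diag}\{A,B\}$. MWGS: given $\mathbb A\in\mathbb R^{r\times s}$ ($r\ge s$) and diagonal $\mathbb D_A>0$, it returns the matrix $\mathfrak W\in\mathbb R^{r\times s}$, a unit upper triangular $\mathbb R\in\mathbb R^{s\times s}$ and a diagonal $\mathbb D_R\in\mathbb R^{s\times s}$ with $\mathbb A^\top=\mathbb R\mathfrak W^\top$ and $\mathfrak W^\top\mathbb D_A\mathfrak W=\mathbb D_R$. It is assumed that every MWGS call is well defined (pre-arrays as required, with $\mathbb D_R$ invertible) and that all quantities involved are differentiable in $\theta$. *)

(* Defs.v *)
From HB Require Import structures.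
From mathcomp Require Import all_boot all_order all_algebra.
From mathcomp Require Import all_classical all_reals all_analysis.

Set Implicit Arguments.
Unset Strict Implicit.
Unset Printing Implicit Defensive.

Import Order.TTheory GRing.Theory Num.Theory.
Import numFieldNormedType.Exports.
Local Open Scope ring_scope.

Section MxNotions.
Variable R : realType.

Definition unit_upper s (U : 'M[R]_s) : Prop :=
  (forall i j : 'I_s, (j < i)%N -> U i j = 0) /\ (forall i : 'I_s, U i i = 1).

Definition posdef s (P : 'M[R]_s) : Prop :=
  P^T = P /\ forall v : 'cV[R]_s, v != 0 -> 0 < (v^T *m P *m v) 0 0.

Definition udu_factor s (P U D : 'M[R]_s) : Prop :=
  unit_upper U /\ is_diag_mx D /\ P = U *m D *m U^T.

Definition mwgs_spec r s (A : 'M[R]_(r, s)) (DA : 'M[R]_r)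
    (W : 'M[R]_(r, s)) (Rm DR : 'M[R]_s) : Prop :=
  [/\ (s <= r)%N, is_diag_mx DA & (forall j : 'I_r, 0 < DA j j)] /\
  [/\ A^T = Rm *m W^T, W^T *m DA *m W = DR, unit_upper Rm,
      is_diag_mx DR & DR \in unitmx].

Definition slow s (M : 'M[R]_s) : 'M[R]_s :=
  \matrix_(i, j) (if (j < i)%N then M i j else 0).
Definition dgl s (M : 'M[R]_s) : 'M[R]_s :=
  \matrix_(i, j) (if i == j then M i j else 0).
Definition supp s (M : 'M[R]_s) : 'M[R]_s :=
  \matrix_(i, j) (if (i < j)%N then M i j else 0).

(* Diff. UD scheme (W, R, D_R are the MWGS outputs on (A, D_A)) *)
Definition diffUD r s (W : 'M[R]_(r, s)) (Rm DR : 'M[R]_s) (DA : 'M[R]_r)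
    (dA : 'M[R]_(r, s)) (dDA : 'M[R]_r) : 'M[R]_s * 'M[R]_s :=
  let M0 := W^T *m DA *m dA *m invmx Rm^T in
  let M2 := W^T *m dDA *m W in
  (Rm *m ((slow M0)^T + supp M0 + supp M2) *m invmx DR,
   (dgl M0) *+ 2 + dgl M2).

Definition pd p a b (i : 'I_p) (f : 'rV[R]_p -> 'M[R]_(a, b))
    (th : 'rV[R]_p) : 'M[R]_(a, b) :=
  'D_(delta_mx 0 i) f th.

End MxNotions.

(* n: state dim, d: observation dim, m: input dim, p: #parameters       *)
Record lti_model (R : realType) (n d m p : nat) := LtiModel {
  mT : 'rV[R]_p -> 'M[R]_n;
  mB : 'rV[R]_p -> 'M[R]_(n, m);
  mZ : 'rV[R]_p -> 'M[R]_(d, n);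
  mbeta : 'rV[R]_p -> 'M[R]_(d, m);
  mQ : 'rV[R]_p -> 'M[R]_n;
  mS : 'rV[R]_p -> 'M[R]_(n, d);
  mH : 'rV[R]_p -> 'M[R]_d;
  malpha0 : 'rV[R]_p -> 'cV[R]_n;
  mPi0 : 'rV[R]_p -> 'M[R]_n }.

Record ud_factors (R : realType) (n d p : nat) := UdFactors {
  UPi0 : 'rV[R]_p -> 'M[R]_n;  DPi0 : 'rV[R]_p -> 'M[R]_n;
  UH : 'rV[R]_p -> 'M[R]_d;    DH : 'rV[R]_p -> 'M[R]_d;
  UQb : 'rV[R]_p -> 'M[R]_n;   DQb : 'rV[R]_p -> 'M[R]_n }.

(* MWGS outputs of Algorithm 1a at each step k, as functions of theta *)
Record alg1a_mwgs (R : realType) (n d p : nat) := Alg1aMwgs {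
  UPp : nat -> 'rV[R]_p -> 'M[R]_n;
  DPp : nat -> 'rV[R]_p -> 'M[R]_n;
  UPf : nat -> 'rV[R]_p -> 'M[R]_n;
  DPf : nat -> 'rV[R]_p -> 'M[R]_n;
  URe : nat -> 'rV[R]_p -> 'M[R]_d;
  DRe : nat -> 'rV[R]_p -> 'M[R]_d;
  Ku  : nat -> 'rV[R]_p -> 'M[R]_(n, d);
  Wt  : nat -> 'rV[R]_p -> 'M[R]_(n + n, n);
  Wm  : nat -> 'rV[R]_p -> 'M[R]_(n + d, n + d) }.

Section Filter.
Variables (R : realType) (n d m p : nat).
Variables (M : lti_model R n d m p) (F : ud_factors R n d p)
          (O : alg1a_mwgs R n d p).
Variables (x : nat -> 'cV[R]_m) (y : nat -> 'cV[R]_d).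

Definition Tbar (th : 'rV[R]_p) : 'M[R]_n :=
  mT M th - mS M th *m invmx (mH M th) *m mZ M th.
Definition Bbar (th : 'rV[R]_p) : 'M[R]_(n, m) :=
  mB M th - mS M th *m invmx (mH M th) *m mbeta M th.
Definition Qbar (th : 'rV[R]_p) : 'M[R]_n :=
  mQ M th - mS M th *m invmx (mH M th) *m (mS M th)^T.

(* pre-arrays (as A, i.e. the transposes of the displayed A^T) *)
Definition timeA (k : nat) (th : 'rV[R]_p) : 'M[R]_(n + n, n) :=
  (row_mx (Tbar th *m UPf O k.-1 th) (UQb F th))^T.
Definition timeDA (k : nat) (th : 'rV[R]_p) : 'M[R]_(n + n) :=
  block_mx (DPf O k.-1 th) 0 0 (DQb F th).
Definition measA (k : nat) (th : 'rV[R]_p) : 'M[R]_(n + d, n + d) :=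
  (block_mx (UPp O k th) 0 (mZ M th *m UPp O k th) (UH F th))^T.
Definition measDA (k : nat) (th : 'rV[R]_p) : 'M[R]_(n + d) :=
  block_mx (DPp O k th) 0 0 (DH F th).
Definition measR (k : nat) (th : 'rV[R]_p) : 'M[R]_(n + d) :=
  block_mx (UPf O k th) (Ku O k th) 0 (URe O k th).
Definition measDR (k : nat) (th : 'rV[R]_p) : 'M[R]_(n + d) :=
  block_mx (DPf O k th) 0 0 (DRe O k th).

Fixpoint alpha_f (k : nat) (th : 'rV[R]_p) : 'cV[R]_n :=
  match k with
  | 0 => malpha0 M th
  | k'.+1 =>
    let ap := Tbar th *m alpha_f k' th + Bbar th *m x k'
              + mS M th *m invmx (mH M th) *m y k' in
    let e := y k'.+1 - mZ M th *m ap - mbeta M th *m x k'.+1 in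
    ap + Ku O k'.+1 th *m (invmx (URe O k'.+1 th) *m e)
  end.

Definition alpha_p (k : nat) (th : 'rV[R]_p) : 'cV[R]_n :=
  Tbar th *m alpha_f k.-1 th + Bbar th *m x k.-1
  + mS M th *m invmx (mH M th) *m y k.-1.
Definition innov (k : nat) (th : 'rV[R]_p) : 'cV[R]_d :=
  y k - mZ M th *m alpha_p k th - mbeta M th *m x k.
Definition innov_bar (k : nat) (th : 'rV[R]_p) : 'cV[R]_d :=
  invmx (URe O k th) *m innov k th.

Record dout := Dout {
  d_alpha_p : 'cV[R]_n; d_UPp : 'M[R]_n; d_DPp : 'M[R]_n;
  d_UPf : 'M[R]_n; d_DPf : 'M[R]_n; d_URe : 'M[R]_d; d_DRe : 'M[R]_d;
  d_Ku : 'M[R]_(n, d); d_ebar : 'cV[R]_d; d_alpha_f : 'cV[R]_n }.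

Variables (i : 'I_p) (th : 'rV[R]_p).

(* one step k >= 1 of Algorithm 1b, given the derivatives
   (d alpha_{k-1|k-1}, d U_{P_{k-1|k-1}}, d D_{P_{k-1|k-1}}) *)
Definition dstep (k : nat) (prev : 'cV[R]_n * 'M[R]_n * 'M[R]_n) : dout :=
  let: (daf, dUf, dDf) := prev in
  let Hi := invmx (mH M th) in
  let dap := pd i Tbar th *m alpha_f k.-1 th + Tbar th *m daf
             + pd i Bbar th *m x k.-1 + pd i (mS M) th *m Hi *m y k.-1
             - mS M th *m Hi *m pd i (mH M) th *m Hi *m y k.-1 in
  let dAt : 'M[R]_(n + n, n) :=
    (row_mx (pd i Tbar th *m UPf O k.-1 th + Tbar th *m dUf)
            (pd i (UQb F) th))^T in
  let dDAt : 'M[R]_(n + n) := block_mx dDf 0 0 (pd i (DQb F) th) in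
  let tu := diffUD (Wt O k th) (UPp O k th) (DPp O k th)
                   (timeDA k th) dAt dDAt in
  let dUp := tu.1 in
  let dDp := tu.2 in
  let dAm : 'M[R]_(n + d, n + d) :=
    (block_mx dUp 0 (pd i (mZ M) th *m UPp O k th + mZ M th *m dUp)
              (pd i (UH F) th))^T in
  let dDAm : 'M[R]_(n + d) := block_mx dDp 0 0 (pd i (DH F) th) in
  let mu := diffUD (Wm O k th) (measR k th) (measDR k th)
                   (measDA k th) dAm dDAm in
  let dUf' := ulsubmx mu.1 in
  let dK := ursubmx mu.1 in
  let dUR := drsubmx mu.1 in
  let dDf' := ulsubmx mu.2 in
  let dDR := drsubmx mu.2 in
  let URi := invmx (URe O k th) in
  let de := - (URi *m dUR *m URi *m innov k th)
            - URi *m (pd i (mZ M) th *m alpha_p k th + mZ M th *m dap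
                      + pd i (mbeta M) th *m x k) in
  let daf' := dap + dK *m innov_bar k th + Ku O k th *m de in
  Dout dap dUp dDp dUf' dDf' dUR dDR dK de daf'.

Fixpoint dstate (k : nat) : 'cV[R]_n * 'M[R]_n * 'M[R]_n :=
  match k with
  | 0 => (pd i (malpha0 M) th, pd i (UPi0 F) th, pd i (DPi0 F) th)
  | k'.+1 => let o := dstep k'.+1 (dstate k') in
             (d_alpha_f o, d_UPf o, d_DPf o)
  end.

Definition alg1b (k : nat) : dout := dstep k (dstate k.-1).

End Filter.

(* Main.v *)
Require Import Defs.
From HB Require Import structures.
From mathcomp Require Import all_boot all_order all_algebra.
From mathcomp Require Import all_classical all_reals all_analysis.
From mathcomp Require Import perm.
From mathcomp Require Import ring lra zify.
Import Order.TTheory GRing.Theory Num.Theory.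
Import numFieldNormedType.Exports.
Local Open Scope ring_scope.
Set Implicit Arguments.
Unset Strict Implicit.
Unset Printing Implicit Defensive.

Section Infra.
Variables (R : realType) (V : normedModType R) (th v : V).

Local Notation der f := (derivable f th v).
Local Notation D f := ('D_v f th).

Lemma mder_big (I : Type) (r : seq I) (P : pred I) (F : I -> V -> R) :
  (forall k, der (F k)) ->
  der (fun t => \sum_(k <- r | P k) F k t) /\
  D (fun t => \sum_(k <- r | P k) F k t) = \sum_(k <- r | P k) D (F k).
Proof.
move=> dF; elim: r => [|a r [IH1 IH2]].
  have -> : (fun t => \sum_(k <- [::] | P k) F k t) = cst 0.
    by apply/funext => t; rewrite big_nil.
  by rewrite big_nil derive_cst; split => //; exact: derivable_cst.
case: (boolP (P a)) => Pa.
  have -> : (fun t => \sum_(k <- a :: r | P k) F k t) =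
     F a + (fun t => \sum_(k <- r | P k) F k t).
    by apply/funext => t; rewrite big_cons Pa.
  by rewrite big_cons Pa deriveD // IH2; split => //; exact: derivableD.
have -> : (fun t => \sum_(k <- a :: r | P k) F k t) =
     (fun t => \sum_(k <- r | P k) F k t).
  by apply/funext => t; rewrite big_cons (negbTE Pa).
by rewrite big_cons (negbTE Pa).
Qed.

Lemma mder_prod (I : Type) (r : seq I) (P : pred I) (F : I -> V -> R) :
  (forall k, der (F k)) ->
  der (fun t => \prod_(k <- r | P k) F k t).
Proof.
move=> dF; elim: r => [|a r IH].
  have -> : (fun t => \prod_(k <- [::] | P k) F k t) = cst 1.
    by apply/funext => t; rewrite big_nil.
  exact: derivable_cst.
case: (boolP (P a)) => Pa.
  have -> : (fun t => \prod_(k <- a :: r | P k) F k t) =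
     F a * (fun t => \prod_(k <- r | P k) F k t).
    by apply/funext => t; rewrite big_cons Pa.
  exact: derivableM.
have -> : (fun t => \prod_(k <- a :: r | P k) F k t) =
     (fun t => \prod_(k <- r | P k) F k t).
  by apply/funext => t; rewrite big_cons (negbTE Pa).
exact: IH.
Qed.

Lemma mder_entry a b (f : V -> 'M[R]_(a, b)) (L : 'M[R]_(a, b)) :
  (forall i j, der (fun t => f t i j) /\ D (fun t => f t i j) = L i j) ->
  der f /\ D f = L.
Proof.
move=> H; have df : der f by apply/derivable_mxP => i j; exact: (H i j).1.
split => //; rewrite derive_mx //; apply/matrixP => i j; rewrite mxE.
exact: (H i j).2.
Qed.

Lemma mderE a b (f : V -> 'M[R]_(a, b)) i j :
  der f -> der (fun t => f t i j) /\ (D f) i j = D (fun t => f t i j).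
Proof.
move=> df; split; first by move/derivable_mxP: df; apply.
by rewrite derive_mx // mxE.
Qed.

Lemma mder_cst a b (C : 'M[R]_(a, b)) : der (fun _ => C) /\ D (fun _ => C) = 0.
Proof. by split; [exact: derivable_cst | exact: derive_cst]. Qed.

Lemma mder_add a b (f g : V -> 'M[R]_(a, b)) : der f -> der g ->
  der (fun t => f t + g t) /\ D (fun t => f t + g t) = D f + D g.
Proof. by move=> df dg; split; [exact: derivableD | exact: deriveD]. Qed.

Lemma mder_opp a b (f : V -> 'M[R]_(a, b)) : der f ->
  der (fun t => - f t) /\ D (fun t => - f t) = - D f.
Proof. by move=> df; split; [exact: derivableN | exact: deriveN]. Qed.

Lemma mder_sub a b (f g : V -> 'M[R]_(a, b)) : der f -> der g ->
  der (fun t => f t - g t) /\ D (fun t => f t - g t) = D f - D g.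
Proof. by move=> df dg; split; [exact: derivableB | exact: deriveB]. Qed.

Lemma mder_mul a b c (f : V -> 'M[R]_(a, b)) (g : V -> 'M[R]_(b, c)) :
  der f -> der g ->
  der (fun t => f t *m g t) /\
  D (fun t => f t *m g t) = D f *m g th + f th *m D g.
Proof.
move=> df dg; apply: mder_entry => i j.
have -> : (fun t => (f t *m g t) i j) =
   (fun t => \sum_(k <- index_enum 'I_b | true) (fun t => f t i k * g t k j) t).
  by apply/funext => t; rewrite mxE.
have [d1 d2] := @mder_big _ (index_enum 'I_b) xpredT
   (fun k t => f t i k * g t k j)
   (fun k => derivableM (mderE i k df).1 (mderE k j dg).1).
split => //; rewrite d2 !mxE -big_split; apply: eq_bigr => k _ /=.
rewrite deriveM; [|exact: (mderE i k df).1|exact: (mderE k j dg).1].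
rewrite (mderE i k df).2 (mderE k j dg).2 addrC.
by congr (_ + _); rewrite mulrC.
Qed.

Lemma mder_tr a b (f : V -> 'M[R]_(a, b)) : der f ->
  der (fun t => (f t)^T) /\ D (fun t => (f t)^T) = (D f)^T.
Proof.
move=> df; apply: mder_entry => i j.
have -> : (fun t => (f t)^T i j) = (fun t => f t j i).
  by apply/funext => t; rewrite mxE.
by rewrite mxE (mderE j i df).2; split => //; exact: (mderE j i df).1.
Qed.

Lemma mder_row a b c (f : V -> 'M[R]_(a, b)) (g : V -> 'M[R]_(a, c)) :
  der f -> der g ->
  der (fun t => row_mx (f t) (g t)) /\
  D (fun t => row_mx (f t) (g t)) = row_mx (D f) (D g).
Proof.
move=> df dg; apply: mder_entry => i j.
case: (split_ordP j) => j' ->.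
  have -> : (fun t => row_mx (f t) (g t) i (lshift c j')) = (fun t => f t i j').
    by apply/funext => t; rewrite row_mxEl.
  by rewrite row_mxEl (mderE i j' df).2; split => //; exact: (mderE i j' df).1.
have -> : (fun t => row_mx (f t) (g t) i (rshift b j')) = (fun t => g t i j').
  by apply/funext => t; rewrite row_mxEr.
by rewrite row_mxEr (mderE i j' dg).2; split => //; exact: (mderE i j' dg).1.
Qed.

Lemma mder_block a1 a2 b1 b2 (fa : V -> 'M[R]_(a1, b1)) (fb : V -> 'M[R]_(a1, b2))
  (fc : V -> 'M[R]_(a2, b1)) (fd : V -> 'M[R]_(a2, b2)) :
  der fa -> der fb -> der fc -> der fd ->
  der (fun t => block_mx (fa t) (fb t) (fc t) (fd t)) /\
  D (fun t => block_mx (fa t) (fb t) (fc t) (fd t)) =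
  block_mx (D fa) (D fb) (D fc) (D fd).
Proof.
move=> da db dc dd; apply: mder_entry => i j.
case: (split_ordP i) => i' ->; case: (split_ordP j) => j' ->.
- have -> : (fun t => block_mx (fa t) (fb t) (fc t) (fd t) (lshift a2 i') (lshift b2 j')) = (fun t => fa t i' j').
    by apply/funext => t; rewrite block_mxEul.
  by rewrite block_mxEul (mderE i' j' da).2; split => //; exact: (mderE i' j' da).1.
- have -> : (fun t => block_mx (fa t) (fb t) (fc t) (fd t) (lshift a2 i') (rshift b1 j')) = (fun t => fb t i' j').
    by apply/funext => t; rewrite block_mxEur.
  by rewrite block_mxEur (mderE i' j' db).2; split => //; exact: (mderE i' j' db).1.
- have -> : (fun t => block_mx (fa t) (fb t) (fc t) (fd t) (rshift a1 i') (lshift b2 j')) = (fun t => fc t i' j').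
    by apply/funext => t; rewrite block_mxEdl.
  by rewrite block_mxEdl (mderE i' j' dc).2; split => //; exact: (mderE i' j' dc).1.
- have -> : (fun t => block_mx (fa t) (fb t) (fc t) (fd t) (rshift a1 i') (rshift b1 j')) = (fun t => fd t i' j').
    by apply/funext => t; rewrite block_mxEdr.
  by rewrite block_mxEdr (mderE i' j' dd).2; split => //; exact: (mderE i' j' dd).1.
Qed.

Lemma mder_det k (f : V -> 'M[R]_k) : der f -> der (fun t => \det (f t)).
Proof.
move=> df.
pose G := fun (s : {perm 'I_k}) t =>
  (-1) ^+ s * \prod_(i <- index_enum 'I_k | true) (fun i t => f t i (s i)) i t.
have -> : (fun t => \det (f t)) =
   (fun t => \sum_(s <- index_enum {perm 'I_k} | true) G s t).
  by apply/funext.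
have dG : forall s, der (G s).
  move=> s; apply: (derivableM (derivable_cst _ _ _)).
  apply: mder_prod => i; exact: (mderE _ _ df).1.
exact: (mder_big (index_enum {perm 'I_k}) xpredT dG).1.
Qed.

Lemma mder_inv k (f : V -> 'M[R]_k) : (forall t, f t \in unitmx) -> der f ->
  der (fun t => invmx (f t)) /\
  D (fun t => invmx (f t)) = - (invmx (f th) *m D f *m invmx (f th)).
Proof.
move=> fu df.
have dinv : der (fun t => invmx (f t)).
  apply/derivable_mxP => i j.
  have -> : (fun t => invmx (f t) i j) = (fun t => (\det (f t))^-1 *
       ((-1) ^+ (j + i) * \det (row' j (col' i (f t))))).
    by apply/funext => t; rewrite /invmx fu !mxE.
  apply: derivableM.
    apply: derivableV; first by have := fu th; rewrite unitmxE unitfE.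
    exact: mder_det.
  apply: (derivableM (derivable_cst _ _ _)); apply: mder_det.
  apply/derivable_mxP => a b.
  have -> : (fun t => row' j (col' i (f t)) a b) = (fun t => f t (lift j a) (lift i b)).
    by apply/funext => t; rewrite !mxE.
  exact: (mderE _ _ df).1.
split => //.
have [_ e] := mder_mul df dinv.
have e1 : (fun t => f t *m invmx (f t)) = (fun _ => 1%:M).
  by apply/funext => t; rewrite mulmxV.
rewrite e1 (mder_cst _).2 in e.
have e2 : f th *m D (fun t => invmx (f t)) = - (D f *m invmx (f th)).
  by apply/eqP; rewrite -subr_eq0 opprK addrC -e.
by rewrite -[LHS](mulKmx (fu th)) e2 mulmxN mulmxA.
Qed.

End Infra.

Section Alg.
Variable R : realType.

Lemma strict_upper_sol s (Rm N dR : 'M[R]_s) : unit_upper Rm -> Rm *m N = dR ->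
  (forall i j : 'I_s, (j <= i)%N -> dR i j = 0) ->
  forall i j : 'I_s, (j <= i)%N -> N i j = 0.
Proof.
move=> [Rl Rd] e dz i j.
suff H : forall k (i : 'I_s), (s - k <= i)%N -> (j <= i)%N -> N i j = 0.
  by move=> ji; apply: (H s) => //; rewrite subnn.
elim=> [|k IH] {}i hi ji.
  by have := ltn_ord i; rewrite subn0 in hi; rewrite ltnNge hi.
case: (ltnP i (s - k)) => hik; last exact: IH.
have := dz i j ji; rewrite -e mxE (bigD1 i) //= Rd mul1r big1 ?addr0 // => l lne.
case: (ltnP l i) => li; first by rewrite Rl // mul0r.
have il : (i < l)%N.
  rewrite ltn_neqAle li andbT; apply: contraNneq lne => il.
  by apply/eqP/val_inj.
rewrite IH ?mulr0 //; lia.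
Qed.

Lemma unit_upper_unit s (U : 'M[R]_s) : unit_upper U -> U \in unitmx.
Proof.
move=> [Ul Ud]; rewrite unitmxE -det_tr det_trig; last first.
  by apply/is_trig_mxP => i j ij; rewrite mxE Ul.
by rewrite big1 ?unitr1 // => i _; rewrite mxE Ud.
Qed.

Lemma diag_tr s (A : 'M[R]_s) : is_diag_mx A -> A^T = A.
Proof.
move=> /is_diag_mxP Ad; apply/matrixP => i j; rewrite mxE.
case: (eqVneq i j) => [->//|ij].
by rewrite !Ad // eq_sym.
Qed.

Lemma diag_eq s (A : 'M[R]_s) : is_diag_mx A -> A = diag_mx (\row_i A i i).
Proof.
move=> /is_diag_mxP Ad; apply/matrixP => i j; rewrite !mxE.
case: (eqVneq i j) => [->|ij]; first by rewrite mulr1n.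
by rewrite mulr0n Ad.
Qed.

Lemma diffUD_alg r s (W dW dA : 'M[R]_(r, s)) (DAm dDA : 'M[R]_r)
    (Rm DR dR dDR : 'M[R]_s) :
  W^T *m DAm *m W = DR -> unit_upper Rm -> is_diag_mx DR -> DR \in unitmx ->
  is_diag_mx DAm ->
  dA^T = dR *m W^T + Rm *m dW^T ->
  dW^T *m DAm *m W + W^T *m dDA *m W + W^T *m DAm *m dW = dDR ->
  (forall i j : 'I_s, (j <= i)%N -> dR i j = 0) -> is_diag_mx dDR ->
  diffUD W Rm DR DAm dA dDA = (dR, dDR).
Proof.
move=> eW Ru DRd DRu DAd edA edDR dRz /is_diag_mxP dDRd.
set X := W^T *m DAm *m dW.
set N := invmx Rm *m dR.
have Runit := unit_upper_unit Ru.
have eN : Rm *m N = dR by rewrite mulKVmx.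
have Nz := strict_upper_sol Ru eN dRz.
have eXT : X^T = dW^T *m DAm *m W.
  by rewrite /X !trmx_mul trmxK diag_tr // mulmxA.
have edA' : dA = W *m dR^T + dW *m Rm^T.
  by rewrite -[dA]trmxK edA linearD /= !trmx_mul !trmxK.
have eM0 : W^T *m DAm *m dA *m invmx Rm^T = DR *m N^T + X.
  rewrite edA' mulmxDr mulmxDl !mulmxA eW.
  rewrite -[X in _ + X = _](mulmxA _ Rm^T) mulmxV ?unitmx_tr // mulmx1.
  by rewrite /N trmx_mul trmx_inv !mulmxA.
have eX : forall i j, X j i + (W^T *m dDA *m W) i j + X i j = dDR i j.
  move=> i j; rewrite -edDR -eXT !mxE //.
set dd := \row_i DR i i.
have eD := diag_eq DRd.
have eM0e : forall i j, (W^T *m DAm *m dA *m invmx Rm^T) i j = dd 0 i * N j i + X i j.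
  by move=> i j; rewrite eM0 {1}eD mul_diag_mx !mxE.
rewrite /diffUD /=.
set M0 := W^T *m DAm *m dA *m invmx Rm^T in eM0e *.
set M2 := W^T *m dDA *m W in eX *.
clearbody M0 M2 N X.
congr pair.
  suff -> : (slow M0)^T + supp M0 + supp M2 = N *m DR.
    by rewrite mulmxA mulmxK.
  rewrite eD mul_mx_diag; apply/matrixP => i j; rewrite !mxE !eM0e.
  case: (ltngtP i j) => ij.
  - rewrite (Nz j i) ?(ltnW ij) // mulr0 add0r.
    have := eX i j; rewrite dDRd; last by rewrite neq_ltn ij.
    by move=> h; rewrite mxE -[RHS]addr0 -h; ring.
  - by rewrite Nz ?(ltnW ij) // mul0r !addr0.
  - by rewrite Nz ?ij // mul0r !addr0.
apply/matrixP => i j; rewrite !mxE.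
case: (eqVneq i j) => [<-|ij].
  by rewrite eM0e Nz // mulr0 add0r -eX; ring.
by rewrite !addr0 dDRd.
Qed.

End Alg.

Section DUD.
Variables (R : realType) (V : normedModType R) (th v : V).
Local Notation der f := (derivable f th v).
Local Notation D f := ('D_v f th).

Lemma cst_entry a b (f : V -> 'M[R]_(a, b)) i j c :
  (forall t, f t i j = c) -> der f -> (D f) i j = 0.
Proof.
move=> fc df; rewrite (mderE i j df).2.
have -> : (fun t => f t i j) = cst c by apply/funext => t; rewrite fc.
exact: derive_cst.
Qed.

Lemma diffUD_ok r s (A : V -> 'M[R]_(r, s)) (DA : V -> 'M[R]_r)
    (W : V -> 'M[R]_(r, s)) (Rm DR : V -> 'M[R]_s) :
  (forall t, mwgs_spec (A t) (DA t) (W t) (Rm t) (DR t)) ->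
  der A -> der DA -> der W -> der Rm -> der DR ->
  diffUD (W th) (Rm th) (DR th) (DA th) (D A) (D DA) = (D Rm, D DR).
Proof.
move=> hs dA dDA dW dR dDR.
have [[_ DAd _] [_ eW Ru DRd DRu]] := hs th.
apply: (diffUD_alg (dW := D W)) => //.
- have e : (fun t => (A t)^T) = (fun t => Rm t *m (W t)^T).
    by apply/funext => t; have [_ [? _]] := hs t.
  have := (mder_tr dA).2.
  by rewrite e (mder_mul dR (mder_tr dW).1).2 (mder_tr dW).2 => <-.
- have e : (fun t => (W t)^T *m DA t *m W t) = DR.
    by apply/funext => t; have [_ [_ ? _]] := hs t.
  have [d1 e1] := mder_mul (mder_tr dW).1 dDA.
  have := (mder_mul d1 dW).2; rewrite e e1 (mder_tr dW).2 => ->.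
  by rewrite mulmxDl.
- move=> i j ji; case: (ltngtP j i) => ij.
  + apply: (cst_entry (c := 0)) => // t.
    by have [_ [_ _ [Rl _] _ _]] := hs t; rewrite Rl.
  + by move: ji; rewrite leqNgt ij.
  + have ij' : i = j by apply/val_inj.
    apply: (cst_entry (c := 1)) => // t.
    by have [_ [_ _ [_ Rd] _ _]] := hs t; rewrite ij' Rd.
- apply/is_diag_mxP => i j ij; apply: (cst_entry (c := 0)) => // t.
  by have [_ [_ _ _ /is_diag_mxP Dd _]] := hs t; rewrite Dd.
Qed.

Lemma dfd a b (f : V -> 'M[R]_(a, b)) : differentiable f th -> der f.
Proof. exact: diff_derivable. Qed.

Lemma dv_cst a b (C : 'M[R]_(a, b)) : der (fun _ => C).
Proof. exact: (proj1 (mder_cst th v C)). Qed.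
Lemma dv_add a b (f g : V -> 'M[R]_(a, b)) : der f -> der g -> der (fun t => f t + g t).
Proof. by move=> h0 h1; exact: (proj1 (mder_add h0 h1)). Qed.
Lemma dv_sub a b (f g : V -> 'M[R]_(a, b)) : der f -> der g -> der (fun t => f t - g t).
Proof. by move=> h0 h1; exact: (proj1 (mder_sub h0 h1)). Qed.
Lemma dv_opp a b (f : V -> 'M[R]_(a, b)) : der f -> der (fun t => - f t).
Proof. by move=> h0; exact: (proj1 (mder_opp h0)). Qed.
Lemma dv_mul a b c (f : V -> 'M[R]_(a, b)) (g : V -> 'M[R]_(b, c)) :
  der f -> der g -> der (fun t => f t *m g t).
Proof. by move=> h0 h1; exact: (proj1 (mder_mul h0 h1)). Qed.
Lemma dv_tr a b (f : V -> 'M[R]_(a, b)) : der f -> der (fun t => (f t)^T).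
Proof. by move=> h0; exact: (proj1 (mder_tr h0)). Qed.
Lemma dv_row a b c (f : V -> 'M[R]_(a, b)) (g : V -> 'M[R]_(a, c)) :
  der f -> der g -> der (fun t => row_mx (f t) (g t)).
Proof. by move=> h0 h1; exact: (proj1 (mder_row h0 h1)). Qed.
Lemma dv_block a1 a2 b1 b2 (fa : V -> 'M[R]_(a1, b1)) (fb : V -> 'M[R]_(a1, b2))
  (fc : V -> 'M[R]_(a2, b1)) (fd : V -> 'M[R]_(a2, b2)) :
  der fa -> der fb -> der fc -> der fd ->
  der (fun t => block_mx (fa t) (fb t) (fc t) (fd t)).
Proof. by move=> h0 h1 h2 h3; exact: (proj1 (mder_block h0 h1 h2 h3)). Qed.

Lemma DcstE a b (C : 'M[R]_(a, b)) : D (fun _ => C) = 0.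
Proof. exact: (proj2 (mder_cst th v C)). Qed.
Lemma DaddE a b (f g : V -> 'M[R]_(a, b)) : der f -> der g ->
  D (fun t => f t + g t) = D f + D g.
Proof. by move=> h0 h1; exact: (proj2 (mder_add h0 h1)). Qed.
Lemma DsubE a b (f g : V -> 'M[R]_(a, b)) : der f -> der g ->
  D (fun t => f t - g t) = D f - D g.
Proof. by move=> h0 h1; exact: (proj2 (mder_sub h0 h1)). Qed.
Lemma DoppE a b (f : V -> 'M[R]_(a, b)) : der f -> D (fun t => - f t) = - D f.
Proof. by move=> h0; exact: (proj2 (mder_opp h0)). Qed.
Lemma DmulE a b c (f : V -> 'M[R]_(a, b)) (g : V -> 'M[R]_(b, c)) :
  der f -> der g -> D (fun t => f t *m g t) = D f *m g th + f th *m D g.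
Proof. by move=> h0 h1; exact: (proj2 (mder_mul h0 h1)). Qed.
Lemma DtrE a b (f : V -> 'M[R]_(a, b)) : der f -> D (fun t => (f t)^T) = (D f)^T.
Proof. by move=> h0; exact: (proj2 (mder_tr h0)). Qed.
Lemma DrowE a b c (f : V -> 'M[R]_(a, b)) (g : V -> 'M[R]_(a, c)) :
  der f -> der g -> D (fun t => row_mx (f t) (g t)) = row_mx (D f) (D g).
Proof. by move=> h0 h1; exact: (proj2 (mder_row h0 h1)). Qed.
Lemma DblockE a1 a2 b1 b2 (fa : V -> 'M[R]_(a1, b1)) (fb : V -> 'M[R]_(a1, b2))
  (fc : V -> 'M[R]_(a2, b1)) (fd : V -> 'M[R]_(a2, b2)) :
  der fa -> der fb -> der fc -> der fd ->
  D (fun t => block_mx (fa t) (fb t) (fc t) (fd t)) =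
  block_mx (D fa) (D fb) (D fc) (D fd).
Proof. by move=> h0 h1 h2 h3; exact: (proj2 (mder_block h0 h1 h2 h3)). Qed.
Lemma DinvE k (f : V -> 'M[R]_k) : (forall t, f t \in unitmx) -> der f ->
  D (fun t => invmx (f t)) = - (invmx (f th) *m D f *m invmx (f th)).
Proof. by move=> h0 h1; exact: (proj2 (mder_inv h0 h1)). Qed.
Lemma dv_inv k (f : V -> 'M[R]_k) : (forall t, f t \in unitmx) -> der f ->
  der (fun t => invmx (f t)).
Proof. by move=> h0 h1; exact: (proj1 (mder_inv h0 h1)). Qed.

End DUD.

Lemma posdef_unit (R : realType) s (P : 'M[R]_s) : posdef P -> P \in unitmx.
Proof.
move=> [Psym Ppos]; rewrite unitmxE unitfE; apply/negP => /det0P [w w0 wP].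
have := Ppos w^T; rewrite trmx_eq0 => /(_ w0).
by rewrite trmxK wP mul0mx mxE ltxx.
Qed.

Lemma uu_dr (R : realType) a b (A : 'M[R]_a) (B : 'M[R]_(a, b)) C (Dm : 'M[R]_b) :
  unit_upper (block_mx A B C Dm) -> unit_upper Dm.
Proof.
move=> [Ul Ud]; split => [i j ji|i].
  by have := Ul (rshift a i) (rshift a j); rewrite block_mxEdr; apply; rewrite /= ltn_add2l.
by have := Ud (rshift a i); rewrite block_mxEdr.
Qed.


Ltac derv1 := match goal with
  | |- derivable (fun _ => ?C) _ _ => exact (@dv_cst _ _ _ _ _ _ C)
  | H : derivable ?f _ _ |- derivable ?f _ _ => exact H
  | |- derivable (fun t => @?A t - @?B t) _ _ => refine (dv_sub (f := A) (g := B) _ _)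
  | |- derivable (fun t => @?A t + @?B t) _ _ => refine (dv_add (f := A) (g := B) _ _)
  | |- derivable (fun t => - @?A t) _ _ => refine (dv_opp (f := A) _)
  | |- derivable (fun t => @?A t *m @?B t) _ _ => refine (dv_mul (f := A) (g := B) _ _)
  | |- derivable (fun t => (@?A t)^T) _ _ => refine (dv_tr (f := A) _)
  | |- derivable (fun t => row_mx (@?A t) (@?B t)) _ _ => refine (dv_row (f := A) (g := B) _ _)
  | |- derivable (fun t => block_mx (@?A t) (@?B t) (@?C t) (@?E t)) _ _ =>
      refine (dv_block (fa := A) (fb := B) (fc := C) (fd := E) _ _ _ _)
  end.
Ltac derv := repeat derv1.
Ltac Dstep := match goal with
  | |- context [derive (fun _ => ?C) ?th ?v] => rewrite (DcstE th v C)
  | |- context [derive (fun t => @?A t - @?B t) _ _] =>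
      rewrite (DsubE (f := A) (g := B)); [|derv|derv]
  | |- context [derive (fun t => @?A t + @?B t) _ _] =>
      rewrite (DaddE (f := A) (g := B)); [|derv|derv]
  | |- context [derive (fun t => - @?A t) _ _] =>
      rewrite (DoppE (f := A)); [|derv]
  | |- context [derive (fun t => @?A t *m @?B t) _ _] =>
      rewrite (DmulE (f := A) (g := B)); [|derv|derv]
  | |- context [derive (fun t => (@?A t)^T) _ _] =>
      rewrite (DtrE (f := A)); [|derv]
  | |- context [derive (fun t => row_mx (@?A t) (@?B t)) _ _] =>
      rewrite (DrowE (f := A) (g := B)); [|derv|derv]
  | |- context [derive (fun t => block_mx (@?A t) (@?B t) (@?C t) (@?E t)) _ _] =>
      rewrite (DblockE (fa := A) (fb := B) (fc := C) (fd := E)); [|derv|derv|derv|derv]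
  | |- context [derive (fun t => invmx (@?A t)) _ _] =>
      rewrite (DinvE (f := A)); [|assumption|derv]
  end.
Ltac Dsimp := repeat Dstep.
Arguments diffUD : simpl never.
Opaque invmx.
Arguments pd : simpl never.

Theorem proposition2 (R : realType) (n d m p : nat)
  (M : lti_model R n d m p) (F : ud_factors R n d p) (O : alg1a_mwgs R n d p)
  (x : nat -> 'cV[R]_m) (y : nat -> 'cV[R]_d) :
  (* model assumptions: Pi0 > 0, H > 0 *)
  (forall th, posdef (mPi0 M th) /\ posdef (mH M th)) ->
  (* UD factorizations of Pi0, H, Qbar *)
  (forall th, udu_factor (mPi0 M th) (UPi0 F th) (DPi0 F th)
           /\ udu_factor (mH M th) (UH F th) (DH F th)
           /\ udu_factor (Qbar M th) (UQb F th) (DQb F th)) ->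
  (* Algorithm 1a: initialization *)
  (forall th, UPf O 0 th = UPi0 F th /\ DPf O 0 th = DPi0 F th) ->
  (* Algorithm 1a: time update (MWGS, well defined) *)
  (forall k th, (0 < k)%N ->
     mwgs_spec (timeA M F O k th) (timeDA F O k th)
               (Wt O k th) (UPp O k th) (DPp O k th)) ->
  (* Algorithm 1a: measurement update (MWGS, well defined) *)
  (forall k th, (0 < k)%N ->
     mwgs_spec (measA M F O k th) (measDA F O k th)
               (Wm O k th) (measR O k th) (measDR O k th)) ->
  (* differentiability in theta of all quantities involved *)
  (forall th,
     [/\ differentiable (mT M) th, differentiable (mB M) th,
         differentiable (mZ M) th, differentiable (mbeta M) th &
         differentiable (mQ M) th] /\
     [/\ differentiable (mS M) th, differentiable (mH M) th,
         differentiable (malpha0 M) th & differentiable (mPi0 M) th] /\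
     [/\ differentiable (UPi0 F) th, differentiable (DPi0 F) th &
         differentiable (UH F) th] /\
     [/\ differentiable (DH F) th, differentiable (UQb F) th &
         differentiable (DQb F) th]) ->
  (forall k th,
     [/\ differentiable (UPp O k) th, differentiable (DPp O k) th,
         differentiable (UPf O k) th, differentiable (DPf O k) th &
         differentiable (URe O k) th] /\
     [/\ differentiable (DRe O k) th, differentiable (Ku O k) th,
         differentiable (Wt O k) th & differentiable (Wm O k) th]) ->
  (* conclusion: Algorithm 1b computes the exact partial derivatives *)
  forall (k : nat) (i : 'I_p) (th : 'rV[R]_p), (0 < k)%N ->
    let o := alg1b M F O x y i th k in
    [/\ d_alpha_p o = pd i (alpha_p M O x y k) th,
        d_UPp o = pd i (UPp O k) th,
        d_DPp o = pd i (DPp O k) th,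
        d_UPf o = pd i (UPf O k) th &
        d_DPf o = pd i (DPf O k) th] /\
    [/\ d_URe o = pd i (URe O k) th,
        d_DRe o = pd i (DRe O k) th,
        d_Ku o = pd i (Ku O k) th,
        d_ebar o = pd i (innov_bar M O x y k) th &
        d_alpha_f o = pd i (alpha_f M O x y k) th].
Proof.
move=> hPD hUD h0 hT hM hd1 hd2 k i th k0.
pose v : 'rV[R]_p := delta_mx 0 i.
have cv a b (f : 'rV[R]_p -> 'M[R]_(a, b)) : differentiable f th -> derivable f th v.
  exact: dfd.
have [[dT dB dZ dbeta dQ] [[dS dH da0 dPi0] [[dUPi0 dDPi0 dUH] [dDH dUQb dDQb]]]] := hd1 th.
move/cv in dT; move/cv in dB; move/cv in dZ; move/cv in dbeta; move/cv in dS.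
move/cv in dH; move/cv in da0; move/cv in dUPi0; move/cv in dDPi0; move/cv in dUH.
move/cv in dDH; move/cv in dUQb; move/cv in dDQb.
have hHu : forall t, mH M t \in unitmx := fun t => posdef_unit (hPD t).2.
have dHi : derivable (fun t => invmx (mH M t)) th v := dv_inv hHu dH.
have dTbar : derivable (Tbar M) th v by rewrite /Tbar; derv.
have dBbar : derivable (Bbar M) th v by rewrite /Bbar; derv.
have step : forall k', derivable (alpha_f M O x y k') th v ->
  derivable (alpha_f M O x y k'.+1) th v /\
  forall o, o = dstep M F O x y i th k'.+1
     (pd i (alpha_f M O x y k') th, pd i (UPf O k') th, pd i (DPf O k') th) ->
  [/\ d_alpha_p o = pd i (alpha_p M O x y k'.+1) th,
      d_UPp o = pd i (UPp O k'.+1) th,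
      d_DPp o = pd i (DPp O k'.+1) th,
      d_UPf o = pd i (UPf O k'.+1) th &
      d_DPf o = pd i (DPf O k'.+1) th] /\
  [/\ d_URe o = pd i (URe O k'.+1) th,
      d_DRe o = pd i (DRe O k'.+1) th,
      d_Ku o = pd i (Ku O k'.+1) th,
      d_ebar o = pd i (innov_bar M O x y k'.+1) th &
      d_alpha_f o = pd i (alpha_f M O x y k'.+1) th].
  move=> k' daf.
  have [[dUPp dDPp dUPf dDPf dURe] [dDRe dKu dWt dWm]] := hd2 k'.+1 th.
  move/cv in dUPp; move/cv in dDPp; move/cv in dUPf; move/cv in dDPf; move/cv in dURe.
  move/cv in dDRe; move/cv in dKu; move/cv in dWt; move/cv in dWm.
  have [[_ _ dUPf' dDPf' _] _] := hd2 k' th.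
  move/cv in dUPf'; move/cv in dDPf'.
  have dUPf'' : derivable (UPf O k'.+1.-1) th v := dUPf'.
  have dDPf'' : derivable (DPf O k'.+1.-1) th v := dDPf'.
  have daf' : derivable (alpha_f M O x y k'.+1.-1) th v := daf.
  have hURu : forall t, URe O k'.+1 t \in unitmx.
    move=> t; have [_ [_ _ Ru _ _]] := hM k'.+1 t isT.
    exact: unit_upper_unit (uu_dr Ru).
  have dURi : derivable (fun t => invmx (URe O k'.+1 t)) th v := dv_inv hURu dURe.
  have dap : derivable (alpha_p M O x y k'.+1) th v by rewrite /alpha_p; derv.
  have dinn : derivable (innov M O x y k'.+1) th v by rewrite /innov; derv.
  have dinnb : derivable (innov_bar M O x y k'.+1) th v by rewrite /innov_bar; derv.
  have eaf : alpha_f M O x y k'.+1 =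
    (fun t => alpha_p M O x y k'.+1 t + Ku O k'.+1 t *m innov_bar M O x y k'.+1 t) by [].
  have dafS : derivable (alpha_f M O x y k'.+1) th v by rewrite eaf; derv.
  have dtA : derivable (timeA M F O k'.+1) th v by rewrite /timeA; derv.
  
  have dtDA : derivable (timeDA F O k'.+1) th v by rewrite /timeDA; derv.
  
  have EA : 'D_v (timeA M F O k'.+1) th = (row_mx (pd i (Tbar M) th *m UPf O k' th
       + Tbar M th *m pd i (UPf O k') th) (pd i (UQb F) th))^T.
    by rewrite /timeA; Dsimp.
  have EDA : 'D_v (timeDA F O k'.+1) th = block_mx (pd i (DPf O k') th) 0 0 (pd i (DQb F) th).
    by rewrite /timeDA; Dsimp.
  have Et := diffUD_ok (fun t => hT k'.+1 t isT) dtA dtDA dWt dUPp dDPp.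
  rewrite EA EDA in Et.
  have dmA : derivable (measA M F O k'.+1) th v by rewrite /measA; derv.
  have dmDA : derivable (measDA F O k'.+1) th v by rewrite /measDA; derv.
  have dmR : derivable (measR O k'.+1) th v by rewrite /measR; derv.
  have dmDR : derivable (measDR O k'.+1) th v by rewrite /measDR; derv.
  have EmA : 'D_v (measA M F O k'.+1) th = (block_mx (pd i (UPp O k'.+1) th) 0
      (pd i (mZ M) th *m UPp O k'.+1 th + mZ M th *m pd i (UPp O k'.+1) th)
      (pd i (UH F) th))^T.
    by rewrite /measA; Dsimp.
  have EmDA : 'D_v (measDA F O k'.+1) th =
      block_mx (pd i (DPp O k'.+1) th) 0 0 (pd i (DH F) th).
    by rewrite /measDA; Dsimp.
  have ER : 'D_v (measR O k'.+1) th =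
      block_mx (pd i (UPf O k'.+1) th) (pd i (Ku O k'.+1) th) 0 (pd i (URe O k'.+1) th).
    by rewrite /measR; Dsimp.
  have EDR : 'D_v (measDR O k'.+1) th =
      block_mx (pd i (DPf O k'.+1) th) 0 0 (pd i (DRe O k'.+1) th).
    by rewrite /measDR; Dsimp.
  have Em := diffUD_ok (fun t => hM k'.+1 t isT) dmA dmDA dWm dmR dmDR.
  rewrite EmA EmDA in Em.
  have Eap : pd i (alpha_p M O x y k'.+1) th =
    pd i (Tbar M) th *m alpha_f M O x y k' th + Tbar M th *m pd i (alpha_f M O x y k') th
             + pd i (Bbar M) th *m x k' + pd i (mS M) th *m invmx (mH M th) *m y k'
             - mS M th *m invmx (mH M th) *m pd i (mH M) th *m invmx (mH M th) *m y k'.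
    rewrite /pd /alpha_p; Dsimp.
    by rewrite !mulmx0 !addr0 mulmxN mulmxDl mulNmx !mulmxA addrA.
  have Eeb : pd i (innov_bar M O x y k'.+1) th =
    - (invmx (URe O k'.+1 th) *m pd i (URe O k'.+1) th *m invmx (URe O k'.+1 th)
        *m innov M O x y k'.+1 th)
    - invmx (URe O k'.+1 th) *m (pd i (mZ M) th *m alpha_p M O x y k'.+1 th
        + mZ M th *m pd i (alpha_p M O x y k'.+1) th + pd i (mbeta M) th *m x k'.+1).
    rewrite /pd /innov_bar /innov; Dsimp.
    rewrite mulmx0 addr0 sub0r; congr (_ + _); first by rewrite mulNmx.
    by rewrite -[in RHS]mulmxN [in RHS]opprD.
  have Eaf : pd i (alpha_f M O x y k'.+1) th = pd i (alpha_p M O x y k'.+1) th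
     + pd i (Ku O k'.+1) th *m innov_bar M O x y k'.+1 th
     + Ku O k'.+1 th *m pd i (innov_bar M O x y k'.+1) th.
    by rewrite /pd eaf; Dsimp; rewrite addrA.
  split => // o ->; rewrite /dstep; cbv beta iota zeta.
  rewrite Et Em /=.
  rewrite ER EDR !block_mxKul !block_mxKur !block_mxKdr -Eap -Eeb.
  by split; split => //; exact: (esym Eaf).
have key : forall k', (derivable (alpha_f M O x y k') th v) /\
  (dstate M F O x y i th k' =
    (pd i (alpha_f M O x y k') th, pd i (UPf O k') th, pd i (DPf O k') th)).
  elim => [|k' [IHd IHe]].
    have e1 : UPf O 0 = UPi0 F by apply/funext => t; rewrite (proj1 (h0 t)).
    have e2 : DPf O 0 = DPi0 F by apply/funext => t; rewrite (proj2 (h0 t)).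
    by split => //; rewrite /= e1 e2.
  have [s1 s2] := step k' IHd.
  split => //; rewrite /= IHe.
  have [[_ _ _ e4 e5] [_ _ _ _ e10]] := s2 _ erefl.
  by rewrite e4 e5 e10.
case: k k0 => // k' _.
have [_ s2] := step k' (proj1 (key k')).
apply: s2; rewrite /alg1b /=.
by rewrite (proj2 (key k')).
Qed.
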